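(* Let $\Sigma$ be a set containing $0$, $(\Gamma,\oplus)$ an abelian group, and $f:\Sigma^n\to\Gamma$. If $f$ has both $K$-separable and $L$-separable arguments for partitions $K=\{K_1,\ldots,K_k\}$ and $L=\{L_1,\ldots,L_l\}$ of $[n]$, then $f$ has $(K\wedge L)$-separable arguments, where $K\wedge L=\{K_i\cap L_j: i\in[k],\,j\in[l]\}\setminus\{\emptyset\}$.
   Context: $[n]=\{1,\ldots,n\}$; for $M=\{i_1<\cdots<i_m\}\subseteq[n]$ and $\bar x=(x_1,\ldots,x_n)$, $\bar x_M=(x_{i_1},\ldots,x_{i_m})$. A function $f:\Sigma^n\to\Gamma$ has $K$-separable arguments (for a partition $K=\{K_1,\ldots,K_k\}$ of $[n]$ into nonempty sets) if there exist functions $f_j:\Sigma^{|K_j|}\to\Gamma$ with $f(\bar x)=f_1(\bar x_{K_1})\oplus\cdots\oplus f_k(\bar x_{K_k})$ for all $\bar x$. *)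

(* Defs.v *)
From HB Require Import structures.
From mathcomp Require Import all_boot all_order all_algebra.
Set Implicit Arguments. Unset Strict Implicit. Unset Printing Implicit Defensive.
Import GRing.Theory.
Local Open Scope ring_scope.

(* [n] is modelled by 'I_n = {0,...,n-1}; Sigma^n by n.-tuple Sigma. *)

(* x_M : the subtuple of x indexed by M, in increasing order of indices
   (enum of a set of ordinals is increasing). *)
Definition restr (Sigma : Type) (n : nat) (x : n.-tuple Sigma) (M : {set 'I_n})
  : #|M|.-tuple Sigma :=
  [tuple tnth x (@enum_val _ (mem M) i) | i < #|M|].

Definition separable_args (Sigma : Type) (Gamma : zmodType) (n : nat)
  (f : n.-tuple Sigma -> Gamma) (K : {set {set 'I_n}}) : Prop :=
  exists g : forall B : {set 'I_n}, #|B|.-tuple Sigma -> Gamma,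
    forall x : n.-tuple Sigma, f x = \sum_(B in K) g B (restr x B).

Definition meet_part (n : nat) (K L : {set {set 'I_n}}) : {set {set 'I_n}} :=
  [set A :&: B | A in K, B in L] :\ set0.

(* Main.v *)
Require Import Defs.
From mathcomp Require Import all_boot all_order all_algebra.
Set Implicit Arguments. Unset Strict Implicit. Unset Printing Implicit Defensive.
Import GRing.Theory.
Local Open Scope ring_scope.

Section Aux.
Variables (Sigma : Type) (zero : Sigma) (n : nat).

Definition ext (S : {set 'I_n}) (x : n.-tuple Sigma) : n.-tuple Sigma :=
  [tuple if i \in S then tnth x i else zero | i < n].

Definition unrestr (C : {set 'I_n}) (y : #|C|.-tuple Sigma) : n.-tuple Sigma :=
  [tuple if i \in C then nth zero y (index i (enum C)) else zero | i < n].

Lemma ext_ext A B x : ext B (ext A x) = ext (B :&: A) x.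
Proof.
apply: eq_from_tnth => i; rewrite !tnth_mktuple inE.
by case: (i \in B); case: (i \in A).
Qed.

Lemma ext0 x y : ext set0 x = ext set0 y.
Proof. by apply: eq_from_tnth => i; rewrite !tnth_mktuple inE. Qed.

Lemma restr_ext S T x : restr (ext T x) S = restr (ext (S :&: T) x) S.
Proof.
apply: eq_from_tnth => j; rewrite !tnth_mktuple inE.
by have := enum_valP j; rewrite /= => ->.
Qed.

Lemma restr_extT S x : restr (ext S x) S = restr x S.
Proof.
apply: eq_from_tnth => j; rewrite !tnth_mktuple.
by have := enum_valP j; rewrite /= => ->.
Qed.

Lemma unrestrK C x : unrestr (restr x C) = ext C x.
Proof.
apply: eq_from_tnth => i; rewrite !tnth_mktuple.
case Hi: (i \in C) => //.
set j := enum_rank_in Hi i.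
have Hj : nth i (enum C) j = i by rewrite nth_enum_rank_in.
have jlt : (j < size (enum C))%N by rewrite -cardE ltn_ord.
have -> : index i (enum C) = j.
  by rewrite -{1}Hj index_uniq // enum_uniq.
have -> : nth zero (restr x C) j = tnth (restr x C) j by rewrite (tnth_nth zero).
rewrite tnth_mktuple.
suff -> : enum_val j = i by [].
by rewrite /j enum_rankK_in.
Qed.

End Aux.

Lemma keyD (Sigma : Type) (zero : Sigma) (Gamma : zmodType) (n : nat)
  (f : n.-tuple Sigma -> Gamma) (K : {set {set 'I_n}}) :
  trivIset K -> separable_args f K ->
  forall x, f x - f (ext zero set0 x) =
            \sum_(A in K) (f (ext zero A x) - f (ext zero set0 x)).
Proof.
move=> /trivIsetP tK [g Hg] x.
rewrite [in LHS]Hg [in LHS]Hg -sumrB; apply: eq_bigr => A AK.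
rewrite Hg Hg -sumrB (bigD1 A) //= restr_extT.
rewrite big1 ?addr0 // => B /andP [BK BA].
rewrite restr_ext (disjoint_setI0 (tK _ _ BK AK BA)).
by rewrite subrr.
Qed.

Lemma meet_sum (n : nat) (Gamma : zmodType) (K L : {set {set 'I_n}})
  (F : {set 'I_n} -> Gamma) :
  trivIset K -> trivIset L -> F set0 = 0 ->
  \sum_(A in K) \sum_(B in L) F (B :&: A) = \sum_(C in meet_part K L) F C.
Proof.
move=> tK tL F0.
rewrite pair_big_dep /=.
rewrite (bigID (fun p : {set 'I_n} * {set 'I_n} => p.2 :&: p.1 != set0)) /=.
rewrite [X in _ + X]big1 ?addr0; last first.
  by move=> p /andP [_]; rewrite negbK => /eqP ->.
set P := [set p : {set 'I_n} * {set 'I_n} | (p.1 \in K) && (p.2 \in L) & p.2 :&: p.1 != set0].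
have -> : meet_part K L = [set (fun p : {set 'I_n} * {set 'I_n} => p.2 :&: p.1) x | x in P].
  apply/setP => C; rewrite /meet_part !inE.
  apply/andP/imsetP.
    case=> C0 /imset2P [A B AK BL EC]; exists (A, B) => //=; last by rewrite EC setIC.
      by rewrite inE /= AK BL /= setIC -EC.
  case=> [[A B]]; rewrite inE /= => /andP [/andP [AK BL] ne] ->.
  by split => //; apply/imset2P; exists A B => //; rewrite setIC.
rewrite big_imset /=; last first.
  move=> [A B] [A' B']; rewrite !inE /= => /andP [/andP [AK BL] ne].
  move=> /andP [/andP [AK' BL'] _] E.
  case/set0Pn: ne => i; rewrite inE => /andP [iB iA].
  have : i \in B' :&: A' by rewrite -E inE iB iA.
  rewrite inE => /andP [iB' iA'].
  by rewrite -(def_pblock tK AK iA) -(def_pblock tL BL iB) (def_pblock tK AK' iA') (def_pblock tL BL' iB').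
apply: eq_bigl => p; by rewrite inE.
Qed.

Theorem lemmaA3 (Sigma : Type) (zero : Sigma) (Gamma : zmodType) (n : nat)
  (f : n.-tuple Sigma -> Gamma) (K L : {set {set 'I_n}}) :
  partition K [set: 'I_n] -> partition L [set: 'I_n] ->
  separable_args f K -> separable_args f L ->
  separable_args f (meet_part K L).
Proof.
move=> pK pL sK sL.
have tK : trivIset K by case/and3P: pK.
have tL : trivIset L by case/and3P: pL.
set Z := ext zero set0 [tuple zero | _ < n].
have EZ x : ext zero set0 x = Z by apply: ext0.
have DK := keyD zero tK sK; have DL := keyD zero tL sL.
set M := meet_part K L.
have key x : f x - f Z = \sum_(C in M) (f (ext zero C x) - f Z).
  rewrite -(EZ x) DK (EZ x).
  rewrite -(@meet_sum _ _ _ _ (fun C => f (ext zero C x) - f Z) tK tL); last first.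
    by rewrite EZ subrr.
  apply: eq_bigr => A AK.
  by rewrite -(EZ (ext zero A x)) DL; apply: eq_bigr => B BL; rewrite ext_ext !EZ.
have fZ : (forall C, C \notin M) -> f Z = 0.
  move=> noM; case: sK => g Hg; rewrite Hg big_pred0 // => A.
  apply/negbTE/negP => AK.
  have /set0Pn [i iA] := partition_neq0 pK AK.
  have iL : i \in cover L by case/and3P: pL => /eqP -> _ _; rewrite inE.
  apply/negP: (noM (A :&: pblock L i)).
  rewrite /M /meet_part !inE negbK; apply/andP; split.
    by apply/set0Pn; exists i; rewrite inE iA mem_pblock.
  by apply/imset2P; exists A (pblock L i) => //; apply: pblock_mem.
case: (pickP (mem M)) => [C0 C0M | noM].
  exists (fun C y => f (unrestr zero y) - f Z + (if C == C0 then f Z else 0)) => x.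
  have S2 : \sum_(C in M) (if C == C0 then f Z else 0) = f Z.
    rewrite (bigD1 C0) //= eqxx big1 ?addr0 //.
    by move=> C /andP [_ /negbTE ->].
  rewrite big_split /= S2.
  under eq_bigr do rewrite unrestrK.
  by rewrite -key subrK.
exists (fun C y => f (unrestr zero y) - f Z) => x.
under eq_bigr do rewrite unrestrK.
rewrite -key fZ ?subr0 // => C; exact/negbT/noM.
Qed.
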